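(* Let $H$ be a Kekul\'ean hexagonal system. Let $\mathbb{C}$ be the set of all Clar covers of $H$, ordered by $C\le C'$ iff $f(C)\subseteq f(C')$, and let $\mathbb{Q}$ be the set of all induced subgraphs of $R(H)$ that are isomorphic to some hypercube $Q_n$ ($n\ge0$), ordered by $Q\le Q'$ iff $Q$ is a subgraph of $Q'$. Then $(\mathbb{C},\le)$ and $(\mathbb{Q},\le)$ are isomorphic posets (via $f$).
   Context: A hexagonal system is a 2-connected finite plane graph in which every interior face is a regular hexagon of side length one; its hexagons are the boundaries of its interior faces; it is Kekul\'ean if it has a perfect matching. A Clar cover of $H$ is a spanning subgraph each of whose components is a hexagon of $H$ or a single edge. The resonance graph $R(H)$ has the perfect matchings of $H$ as vertices, two adjacent iff their symmetric difference is the edge set of a hexagon of $H$. For a Clar cover $C$, $f(C)$ denotes the subgraph of $R(H)$ induced by all perfect matchings $M$ of $H$ such that every hexagon component of $C$ is $M$-alternating and every single-edge component of $C$ belongs to $M$. *)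

(* Defs.v *)
(* Combinatorial model of hexagonal systems inside the
   hexagonal lattice, drawn as the "brick wall" lattice on Z x Z. *)
From HB Require Import structures.
From mathcomp Require Import all_boot all_order all_algebra.
Set Implicit Arguments. Unset Strict Implicit. Unset Printing Implicit Defensive.
Import Order.TTheory GRing.Theory Num.Theory.
Local Open Scope ring_scope.

Definition point := (int * int)%type.

(* lattice edges: (p, false) joins p and p+(1,0); (p, true) joins p and p+(0,1) *)
Definition edge := (point * bool)%type.

Definition ends (e : edge) : point * point :=
  let: (p, b) := e in
  if b then (p, (p.1, p.2 + 1)) else (p, (p.1 + 1, p.2)).

(* A cell (hexagonal face of the lattice) is named by its lower-left corner
   (x,y) with x + y even; its six vertices are
   (x,y),(x+1,y),(x+2,y),(x+2,y+1),(x+1,y+1),(x,y+1) in cyclic order. *)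
Definition is_cell (c : point) : bool := (2 %| c.1 + c.2)%Z.

Definition hex_verts (c : point) : seq point :=
  let: (x, y) := c in
  [:: (x, y); (x + 1, y); (x + 2, y); (x + 2, y + 1); (x + 1, y + 1); (x, y + 1)].

Definition hex_edges (c : point) : seq edge :=
  let: (x, y) := c in
  [:: ((x, y), false); ((x + 1, y), false); ((x + 2, y), true);
      ((x + 1, y + 1), false); ((x, y + 1), false); ((x, y), true)].

Definition cell_adj (c d : point) : bool :=
  has (fun e => e \in hex_edges d) (hex_edges c).

Definition edgesH (S : seq point) : seq edge := flatten (map hex_edges S).
Definition vertsH (S : seq point) : seq point := flatten (map hex_verts S).

Definition adjH (S : seq point) (a b : point) : bool :=
  has (fun e => (ends e == (a, b)) || (ends e == (b, a))) (edgesH S).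

(* 2-connected: at least 3 vertices and connected after deleting any vertex w
   (w outside the graph gives plain connectivity) *)
Definition two_connected (S : seq point) : Prop :=
  (3 <= size (undup (vertsH S)))%N /\
  forall w u v : point, u \in vertsH S -> v \in vertsH S -> u != w -> v != w ->
    exists p : seq point, path (fun a b => adjH S a b && (b != w)) u p && (last u p == v).

(* a cell strictly to the right of every cell of S lies in the unbounded face *)
Definition far (S : seq point) (c : point) : bool := all (fun s => s.1 + 2 < c.1) S.

(* every cell not in S lies in the unbounded face of G(S): it is joined to a far
   cell by a chain of edge-adjacent cells not in S *)
Definition hole_free (S : seq point) : Prop :=
  forall c : point, is_cell c -> c \notin S ->
    exists p : seq point,
      path (fun a b => [&& cell_adj a b, is_cell b & b \notin S]) c p && far S (last c p).

(* S is the set of hexagons (interior faces) of a hexagonal system G(S) *)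
Definition hexagonal_system (S : seq point) : Prop :=
  [/\ S != [::], all is_cell S, two_connected S & hole_free S].

Definition VH (S : seq point) := seq_sub (vertsH S).
Definition EH (S : seq point) := seq_sub (edgesH S).

Definition incident (S : seq point) (v : VH S) (e : EH S) : bool :=
  ((ends (val e)).1 == val v) || ((ends (val e)).2 == val v).

Definition perfect_matching (S : seq point) (M : {set EH S}) : bool :=
  [forall v : VH S, #|[set e in M | incident v e]| == 1%N].

Definition kekulean (S : seq point) : Prop := exists M : {set EH S}, perfect_matching M.

Definition pm_set (S : seq point) : {set {set EH S}} := [set M | perfect_matching M].

Definition hexE (S : seq point) (h : point) : {set EH S} :=
  [set e : EH S | val e \in hex_edges h].
Definition hexV (S : seq point) (h : point) : {set VH S} :=
  [set v : VH S | val v \in hex_verts h].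

Definition radj (S : seq point) (M M' : {set EH S}) : bool :=
  has (fun h => (M :\: M') :|: (M' :\: M) == hexE S h) S.

Definition inM (S : seq point) (M : {set EH S}) (e : edge) : bool :=
  [exists x in M, val x == e].

Definition alternating (S : seq point) (M : {set EH S}) (h : point) : bool :=
  let b := map (inM M) (hex_edges h) in
  (b == [:: true; false; true; false; true; false]) ||
  (b == [:: false; true; false; true; false; true]).

Definition crel (S : seq point) (C : {set EH S}) : rel (VH S) :=
  fun u v => [exists e in C, (ends (val e) == (val u, val v)) || (ends (val e) == (val v, val u))].

Definition comp (S : seq point) (C : {set EH S}) (v : VH S) : {set VH S} :=
  [set u | connect (crel C) v u].

Definition compE (S : seq point) (C : {set EH S}) (v : VH S) : {set EH S} :=
  [set e in C | [exists u in comp C v, incident u e]].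

Definition hex_comp (S : seq point) (C : {set EH S}) (h : point) : bool :=
  (h \in S) && [exists v, (comp C v == hexV S h) && (compE C v == hexE S h)].

Definition edge_comp (S : seq point) (C : {set EH S}) (e : EH S) : bool :=
  [exists v, (#|comp C v| == 2%N) && (compE C v == [set e])].

Definition clar_cover (S : seq point) (C : {set EH S}) : bool :=
  [forall v : VH S,
     [exists h : seq_sub S, (comp C v == hexV S (val h)) && (compE C v == hexE S (val h))]
     || ((#|comp C v| == 2%N) && (#|compE C v| == 1%N))].

(* f(C), given by its vertex set (an induced subgraph of R(H)) *)
Definition fC (S : seq point) (C : {set EH S}) : {set {set EH S}} :=
  [set M in pm_set S |
     [forall h : seq_sub S, hex_comp C (val h) ==> alternating M (val h)] &&
     [forall e : EH S, edge_comp C e ==> (e \in M)]].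

Definition clar_le (S : seq point) (C C' : {set EH S}) : bool := fC C \subset fC C'.

(* hypercube Q_n on {ffun 'I_n -> bool} *)
Definition hamming (n : nat) (a b : {ffun 'I_n -> bool}) : nat := #|[set i | a i != b i]|.

Definition cube_sub (S : seq point) (X : {set {set EH S}}) : Prop :=
  X \subset pm_set S /\
  exists n : nat, exists phi : {ffun 'I_n -> bool} -> {set EH S},
    [/\ injective phi, X = [set phi a | a : {ffun 'I_n -> bool}] &
        forall a b, radj (phi a) (phi b) = (hamming a b == 1%N)].

(* Main.v *)
From mathcomp Require Import all_boot all_order all_algebra zify.
Require Import Defs.
Set Implicit Arguments. Unset Strict Implicit. Unset Printing Implicit Defensive.

Module MA.

Definition p0 : point := (0%R, 0%R).
Definition e0 : edge := (p0, false).
Definition incP (p : point) (e : edge) := ((ends e).1 == p) || ((ends e).2 == p).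
Definition pat := [:: true; false; true; false; true; false].

Lemma LF1 h : uniq (hex_edges h).
Proof. case: h => x y /=. rewrite !inE !xpair_eqE /=. lia. Qed.

Lemma LF1v h : uniq (hex_verts h).
Proof. case: h => x y /=. rewrite !inE !xpair_eqE /=. lia. Qed.

Lemma LF2 h e : e \in hex_edges h -> ((ends e).1 \in hex_verts h) && ((ends e).2 \in hex_verts h).
Proof.
case: h => x y; case: e => [[a b] []];
rewrite /= !inE !xpair_eqE /= ?andbT ?andbF ?orbF /=; lia.
Qed.

Lemma LF3 e : (ends e).1 != (ends e).2.
Proof. case: e => [[a b] []]; rewrite /= xpair_eqE; lia. Qed.

Lemma LF4 (h : point) (P : edge -> bool) (k : nat) : (k < 6)%N ->
  count (fun e => P e && incP (nth p0 (hex_verts h) k) e) (hex_edges h)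
  = (P (nth e0 (hex_edges h) k) + P (nth e0 (hex_edges h) ((k+5)%%6)))%N.
Proof.
case: h => x y.
case: k => [|[|[|[|[|[|]]]]]] //= _;
rewrite /incP /= !xpair_eqE;
case: (P _); case: (P _); case: (P _); case: (P _); case: (P _); case: (P _); simpl; lia.
Qed.

Lemma LF5 h k : (k < 5)%N ->
  (ends (nth e0 (hex_edges h) k) == (nth p0 (hex_verts h) k, nth p0 (hex_verts h) k.+1)) ||
  (ends (nth e0 (hex_edges h) k) == (nth p0 (hex_verts h) k.+1, nth p0 (hex_verts h) k)).
Proof.
case: h => x y.
case: k => [|[|[|[|[|]]]]] //= _; rewrite !xpair_eqE /=; lia.
Qed.

Lemma LF6 (c d : point) (e1 e2 : edge) : is_cell c -> is_cell d -> e1 != e2 ->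
  e1 \in hex_edges c -> e2 \in hex_edges c -> e1 \in hex_edges d -> e2 \in hex_edges d -> c = d.
Proof.
case: c => x y; case: d => x' y'; case: e1 => [[a b] []]; case: e2 => [[a' b'] []];
rewrite /is_cell /= !inE !xpair_eqE /= ?andbT ?andbF ?orbF /= => hc hd ne h1 h2 h3 h4;
apply/eqP; rewrite xpair_eqE; lia.
Qed.

Lemma LF7 (f : edge -> bool) h :
  ((map f (hex_edges h) == pat) || (map f (hex_edges h) == map negb pat)) =
  all (fun k => f (nth e0 (hex_edges h) k) + f (nth e0 (hex_edges h) ((k+5)%%6)) == 1)%N (iota 0 6).
Proof.
case: h => x y /=.
case: (f _); case: (f _); case: (f _); case: (f _); case: (f _); case: (f _); by [].
Qed.

Definition evens h := [seq nth e0 (hex_edges h) k | k <- [:: 0; 2; 4]]%N.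

Lemma LF8 h k : (k < 6)%N -> (nth e0 (hex_edges h) k \in evens h) = ~~ odd k.
Proof.
case: h => x y.
case: k => [|[|[|[|[|[|]]]]]] //= _; rewrite !inE !xpair_eqE /=; lia.
Qed.

Lemma LF9 h p : p \in hex_verts h -> exists2 k, (k < 6)%N & p = nth p0 (hex_verts h) k.
Proof.
move=> hp; exists (index p (hex_verts h)); last by rewrite nth_index.
have -> : 6%N = size (hex_verts h) by case: h {hp}.
by rewrite index_mem.
Qed.

Lemma LF10 h p e : e \in hex_edges h -> incP p e -> p \in hex_verts h.
Proof. by move=> /LF2 /andP[h1 h2] /orP[] /eqP <-. Qed.

Lemma LF11 h : [seq e \in evens h | e <- hex_edges h] = pat.
Proof. case: h => x y; rewrite /= !inE !xpair_eqE /=. do 6 (congr (_ :: _); first lia). Qed.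

End MA.
Import MA.

Module MB.

Section Basics.
Variable S : seq point.
Local Notation E := (EH S).
Local Notation V := (VH S).

Lemma mem_edgesH c e : c \in S -> e \in hex_edges c -> e \in edgesH S.
Proof. by move=> cS he; apply/flatten_mapP; exists c. Qed.

Lemma mem_vertsH c p : c \in S -> p \in hex_verts c -> p \in vertsH S.
Proof. by move=> cS he; apply/flatten_mapP; exists c. Qed.

Lemma edgesHP e : e \in edgesH S -> exists2 c, c \in S & e \in hex_edges c.
Proof. by move/flatten_mapP. Qed.

Lemma src_mem (e : E) : (ends (val e)).1 \in vertsH S.
Proof.
have [c cS he] := edgesHP (ssvalP e).
by have /andP[h1 _] := LF2 he; apply: mem_vertsH h1.
Qed.
Lemma dst_mem (e : E) : (ends (val e)).2 \in vertsH S.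
Proof.
have [c cS he] := edgesHP (ssvalP e).
by have /andP[_ h1] := LF2 he; apply: mem_vertsH h1.
Qed.

Definition src (e : E) : V := SeqSub (src_mem e).
Definition dst (e : E) : V := SeqSub (dst_mem e).

Lemma incidentE (v : V) (e : E) : incident v e = (v == src e) || (v == dst e).
Proof. by rewrite /incident -!val_eqE /= ![_ == val v]eq_sym. Qed.

Lemma src_dst e : src e != dst e.
Proof. by rewrite -val_eqE /= LF3. Qed.

Lemma incident_src e : incident (src e) e.
Proof. by rewrite incidentE eqxx. Qed.
Lemma incident_dst e : incident (dst e) e.
Proof. by rewrite incidentE eqxx orbT. Qed.

Definition Ev (v : V) := [set e : E | incident v e].

Lemma inM_val (A : {set E}) x : inM A (val x) = (x \in A).
Proof.
apply/existsP/idP => [[y /andP[yA /eqP/val_inj <-]] // | xA].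
by exists x; rewrite xA eqxx.
Qed.

Lemma inM_out (A : {set E}) e : e \notin edgesH S -> inM A e = false.
Proof. by move=> ne; apply/existsP => -[y /andP[_ /eqP ey]]; move: ne; rewrite -ey (ssvalP y). Qed.

Lemma inM_case (P : edge -> Prop) e :
  (forall x : E, P (val x)) -> (e \notin edgesH S -> P e) -> P e.
Proof.
move=> h1 h2; case: (boolP (e \in edgesH S)) => [he|]; last exact: h2.
exact: (h1 (SeqSub he)).
Qed.

Lemma inMI (A B : {set E}) e : inM (A :&: B) e = inM A e && inM B e.
Proof. case: (boolP (e \in edgesH S)) => [he|ne]; last by rewrite !inM_out.
by rewrite -[e]/(val (SeqSub he : E)) !inM_val inE. Qed.
Lemma inMU (A B : {set E}) e : inM (A :|: B) e = inM A e || inM B e.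
Proof. case: (boolP (e \in edgesH S)) => [he|ne]; last by rewrite !inM_out.
by rewrite -[e]/(val (SeqSub he : E)) !inM_val inE. Qed.
Lemma inMD (A B : {set E}) e : inM (A :\: B) e = inM A e && ~~ inM B e.
Proof. case: (boolP (e \in edgesH S)) => [he|ne]; last by rewrite !inM_out.
by rewrite -[e]/(val (SeqSub he : E)) !inM_val inE andbC. Qed.

Lemma inM_hexE h e : h \in S -> e \in hex_edges h -> inM (hexE S h) e.
Proof.
move=> hS he; have := mem_edgesH hS he => hE.
by rewrite -[e]/(val (SeqSub hE : E)) inM_val inE.
Qed.

Lemma B1 (l : seq edge) (P : pred edge) : uniq l -> {subset l <= edgesH S} ->
  #|[set x : E | (val x \in l) && P (val x)]| = count P l.
Proof.
elim: l => [|x l IH] /=.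
  by move=> _ _; apply/eqP; rewrite cards_eq0; apply/eqP/setP => y; rewrite !inE.
case/andP=> xl ul sub.
have xE : x \in edgesH S by apply: sub; rewrite inE eqxx.
have sub' : {subset l <= edgesH S} by move=> y yl; apply: sub; rewrite inE yl orbT.
case: (boolP (P x)) => Px.
  have -> : [set y : E | (val y \in x :: l) && P (val y)] =
            (SeqSub xE : E) |: [set y : E | (val y \in l) && P (val y)].
    apply/setP => y; rewrite !inE -val_eqE /=.
    by case: (eqVneq (val y) x) => [->|] //=; rewrite Px.
  rewrite cardsU1 IH // inE /=.
  by case: (x \in l) xl.
have -> : [set y : E | (val y \in x :: l) && P (val y)] =
          [set y : E | (val y \in l) && P (val y)].
  apply/setP => y; rewrite !inE.
  by case: (eqVneq (val y) x) => [->|] //=; rewrite (negbTE Px) ?andbF.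
by rewrite IH.
Qed.

Lemma hexE_card h : h \in S -> #|hexE S h| = 6.
Proof.
move=> hS.
have -> : hexE S h = [set x : E | (val x \in hex_edges h) && predT (val x)].
  by apply/setP => x; rewrite !inE andbT.
rewrite B1 ?LF1 ?count_predT //; first by case: h hS.
by move=> e; apply: mem_edgesH.
Qed.

Lemma VC (A : {set E}) h (v : V) : h \in S ->
  #|A :&: hexE S h :&: Ev v| = count (fun e => inM A e && incP (val v) e) (hex_edges h).
Proof.
move=> hS; rewrite -B1 ?LF1 //; last by move=> e; apply: mem_edgesH.
apply: eq_card => x; rewrite !inE inM_val.
by rewrite -andbA andbCA.
Qed.

Lemma hexE_ends h (e : E) : e \in hexE S h -> (src e \in hexV S h) && (dst e \in hexV S h).
Proof. by rewrite !inE => /LF2. Qed.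

Lemma hexE_inc h (e : E) v : e \in hexE S h -> incident v e -> v \in hexV S h.
Proof.
by move=> /hexE_ends /andP[h1 h2]; rewrite incidentE => /orP[] /eqP ->.
Qed.

End Basics.

End MB.
Import MB.

Module MC.

Section Alt.
Variable S : seq point.
Local Notation E := (EH S).
Local Notation V := (VH S).

Definition sd (A B : {set E}) := (A :\: B) :|: (B :\: A).

Lemma size_hv h : size (hex_verts h) = 6%N. Proof. by case: h. Qed.
Lemma size_he h : size (hex_edges h) = 6%N. Proof. by case: h. Qed.

Lemma vert_ex h k : h \in S -> (k < 6)%N -> exists v : V, val v = nth p0 (hex_verts h) k.
Proof.
move=> hS hk.
have hv : nth p0 (hex_verts h) k \in vertsH S.
  by apply: (mem_vertsH hS); apply: mem_nth; rewrite size_hv.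
by exists (SeqSub hv).
Qed.

Lemma pm_deg (M : {set E}) v : perfect_matching M -> #|M :&: Ev v| = 1.
Proof.
move=> /forallP /(_ v) /eqP <-; apply: eq_card => x; by rewrite !inE.
Qed.

Lemma AltDeg (A : {set E}) h : h \in S ->
  alternating A h = [forall v, (v \in hexV S h) ==> (#|A :&: hexE S h :&: Ev v| == 1)].
Proof.
move=> hS; rewrite /alternating LF7.
apply/allP/forallP => [H v|H k].
  apply/implyP; rewrite inE => /LF9 [k hk ev].
  rewrite VC // ev LF4 //; apply: H; by rewrite mem_iota.
rewrite mem_iota add0n => /andP[_ hk].
have [v ev] := vert_ex hS hk.
have := H v; rewrite inE ev mem_nth ?size_hv //=.
by rewrite VC // ev LF4.
Qed.

Lemma alt_ext (A B : {set E}) h :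
  {in hex_edges h, inM A =1 inM B} -> alternating A h = alternating B h.
Proof. by move=> /eq_in_map eqm; rewrite /alternating eqm. Qed.

Lemma AltI (A : {set E}) h : h \in S -> alternating (A :&: hexE S h) h = alternating A h.
Proof. by move=> hS; apply: alt_ext => e he; rewrite inMI inM_hexE ?andbT. Qed.

Lemma AltFlip (A : {set E}) h : h \in S -> alternating (hexE S h :\: A) h = alternating A h.
Proof.
move=> hS; rewrite /alternating.
have -> : map (inM (hexE S h :\: A)) (hex_edges h) = map negb (map (inM A) (hex_edges h)).
  by rewrite -map_comp; apply/eq_in_map => e he; rewrite inMD inM_hexE.
case: (h) => x y /=.
by case: (inM A _); case: (inM A _); case: (inM A _); case: (inM A _); case: (inM A _); case: (inM A _).
Qed.


Lemma AltTwo (A B : {set E}) h : h \in S -> alternating A h -> alternating B h ->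
  A :&: hexE S h = B :&: hexE S h \/ A :&: hexE S h = hexE S h :\: B.
Proof.
move=> hS hA hB.
have key : {in hex_edges h, inM A =1 inM B} \/ {in hex_edges h, inM A =1 (fun e => ~~ inM B e)}.
  move: hA hB; rewrite /alternating => /orP[] /eqP eA /orP[] /eqP eB.
  - by left; apply/eq_in_map; rewrite eA eB.
  - by right; apply/eq_in_map; rewrite (map_comp negb (inM B)) eA eB.
  - by right; apply/eq_in_map; rewrite (map_comp negb (inM B)) eA eB.
  - by left; apply/eq_in_map; rewrite eA eB.
case: key => key; [left|right]; apply/setP => x; rewrite !inE;
  case: (boolP (val x \in hex_edges h)) => hx; rewrite ?andbF ?andbT //;
  by rewrite -!inM_val key.
Qed.

Lemma cov (M : {set E}) h v : h \in S -> perfect_matching M -> alternating M h ->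
  v \in hexV S h -> M :&: Ev v \subset hexE S h.
Proof.
move=> hS pM aM vh.
have h1 : #|M :&: hexE S h :&: Ev v| = 1%N.
  by move: aM; rewrite AltDeg // => /forallP /(_ v) /implyP /(_ vh) /eqP.
have h2 := pm_deg v pM.
have sub : M :&: hexE S h :&: Ev v \subset M :&: Ev v.
  by apply/subsetP => x; rewrite !inE => /andP[/andP[-> _] ->].
have : M :&: hexE S h :&: Ev v == M :&: Ev v by rewrite eqEcard sub h1 h2.
move/eqP <-; by apply/subsetP => x; rewrite !inE => /andP[/andP[_ ->]].
Qed.

Lemma cov_edge (M : {set E}) h v e : h \in S -> perfect_matching M -> alternating M h ->
  v \in hexV S h -> e \in M -> incident v e -> e \in hexE S h.
Proof.
move=> hS pM aM vh eM ve; have /subsetP := cov hS pM aM vh; apply; by rewrite !inE eM.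
Qed.

Lemma hexEv_card h v : h \in S -> v \in hexV S h -> #|hexE S h :&: hexE S h :&: Ev v| = 2%N.
Proof.
move=> hS; rewrite inE => /LF9 [k hk ev].
rewrite VC // ev LF4 // !inM_hexE //; apply: mem_nth; rewrite size_he //.
by rewrite ltn_mod.
Qed.

Lemma AltPM (M : {set E}) h : h \in S -> perfect_matching M ->
  perfect_matching (sd M (hexE S h)) -> alternating M h.
Proof.
move=> hS pM pN; rewrite AltDeg //; apply/forallP => v; apply/implyP => vh.
set H := hexE S h.
have hM := pm_deg v pM; have hN := pm_deg v pN; have hH := hexEv_card hS vh.
have c1 := cardsID H (M :&: Ev v).
have c2 := cardsID H (sd M H :&: Ev v).
have c3 := cardsID M (H :&: H :&: Ev v).
have e1 : M :&: Ev v :&: H = M :&: H :&: Ev v.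
  by apply/setP => x; rewrite /sd !(in_setI, in_setD, in_setU); case: (x \in M); case: (x \in H); case: (x \in Ev v).
have e2 : M :&: Ev v :\: H = sd M H :&: Ev v :\: H.
  by apply/setP => x; rewrite /sd !(in_setI, in_setD, in_setU); case: (x \in M); case: (x \in H); case: (x \in Ev v).
have e3 : sd M H :&: Ev v :&: H = H :&: H :&: Ev v :\: M.
  by apply/setP => x; rewrite /sd !(in_setI, in_setD, in_setU); case: (x \in M); case: (x \in H); case: (x \in Ev v).
have e4 : H :&: H :&: Ev v :&: M = M :&: H :&: Ev v.
  by apply/setP => x; rewrite /sd !(in_setI, in_setD, in_setU); case: (x \in M); case: (x \in H); case: (x \in Ev v).
rewrite e1 e2 in c1; rewrite e3 in c2; rewrite e4 in c3.
apply/eqP; move: c1 c2 c3; rewrite hM hN hH; lia.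
Qed.

End Alt.

End MC.
Import MC.

Module MD.

Section Fam.
Variable S : seq point.
Hypothesis cellS : all is_cell S.
Local Notation E := (EH S).
Local Notation V := (VH S).

Lemma hexE_inj2 h h' : h \in S -> h' \in S -> (1 < #|hexE S h :&: hexE S h'|)%N -> h = h'.
Proof.
move=> hS hS' /card_gt1P [x [y [hx hy nxy]]].
move: hx hy; rewrite !inE => /andP[x1 x2] /andP[y1 y2].
apply: (LF6 (e1 := val x) (e2 := val y)) => //; try by apply: (allP cellS).
Qed.

Lemma hexE_inj h h' : h \in S -> h' \in S -> hexE S h = hexE S h' -> h = h'.
Proof. by move=> hS hS' eq; apply: hexE_inj2 => //; rewrite -eq setIid hexE_card. Qed.

Definition fam (X : {set E}) := exists2 h, h \in S & X = hexE S h.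

Lemma fam_card X : fam X -> #|X| = 6%N.
Proof. by case=> h hS ->; rewrite hexE_card. Qed.

Lemma fam_meet X Y : fam X -> fam Y -> X != Y -> (#|X :&: Y| <= 1)%N.
Proof.
case=> h hS -> [h' hS' ->] ne; rewrite leqNgt; apply/negP => /(hexE_inj2 hS hS') eq.
by move: ne; rewrite eq eqxx.
Qed.

Lemma sd0 (A G : {set E}) : sd A G = set0 -> A = G.
Proof.
move/setP => H; apply/setP => x; move: (H x); rewrite /sd !inE.
by case: (x \in A); case: (x \in G).
Qed.

Lemma step (A B G G' : {set E}) : fam A -> fam B -> fam G -> fam G' ->
  sd A G = sd B G' -> A != B -> G != A -> G = B.
Proof.
move=> fA fB fG fG' eq nAB nGA; apply/eqP; apply/negPn/negP => nGB.
have cB := fam_card fB.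
have m1 : (#|B :&: A| <= 1)%N by apply: fam_meet => //; rewrite eq_sym.
have m2 : (#|B :&: G| <= 1)%N by apply: fam_meet => //; rewrite eq_sym.
have c1 := cardsID (A :|: G) B.
have c2 := cardsUI (B :&: A) (B :&: G).
rewrite -setIUr in c2.
have sub : B :\: (A :|: G) \subset B :&: G'.
  apply/subsetP => x; rewrite !inE => /andP[/norP[xA xG] xB].
  have /setP/(_ x) := eq; rewrite /sd !inE (negbTE xA) (negbTE xG) xB /=.
  by case: (x \in G').
have := subset_leq_card sub => c3.
have eBG' : B = G'.
  apply/eqP; apply/negPn/negP => nB.
  have := fam_meet fB fG' nB; lia.
move: eq; rewrite -eBG'.
have -> : sd B B = set0 by apply/setP => x; rewrite /sd !inE; case: (x \in B).
move/sd0 => eAG; by move: nGA; rewrite eAG eqxx.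
Qed.

End Fam.

End MD.
Import MD.

Module MG.

Section Comp.
Variable S : seq point.
Local Notation E := (EH S).
Local Notation V := (VH S).
Variable C : {set E}.

Lemma crel_sym : symmetric (crel C).
Proof.
move=> u w; apply/existsP/existsP => [[x /andP[xC h]]|[x /andP[xC h]]];
  by exists x; rewrite xC orbC.
Qed.

Lemma crel_cs : connect_sym (crel C).
Proof. exact: sym_connect_sym crel_sym. Qed.

Lemma crel_inc u w : crel C u w -> exists2 x, x \in C & incident u x && incident w x.
Proof.
case/existsP=> x /andP[xC h]; exists x => //.
rewrite /incident; case/orP: h => /eqP ee; rewrite ee /= !eqxx ?orbT //.
Qed.

Lemma crel_src x : x \in C -> crel C (src x) (dst x).
Proof. by move=> xC; apply/existsP; exists x; rewrite xC /= -surjective_pairing eqxx. Qed.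

Lemma crel_inc2 u w x : x \in C -> incident u x -> incident w x -> connect (crel C) u w.
Proof.
move=> xC; rewrite !incidentE => /orP[] /eqP -> /orP[] /eqP ->; rewrite ?connect0 //.
  exact/connect1/crel_src.
by rewrite crel_cs; apply/connect1/crel_src.
Qed.

Lemma comp_self v : v \in comp C v.
Proof. by rewrite inE connect0. Qed.

Lemma comp_closed (A : {set V}) v :
  (forall u w, u \in A -> crel C u w -> w \in A) -> v \in A -> comp C v \subset A.
Proof.
move=> cl vA; apply/subsetP => u; rewrite inE => cvu.
have clA : closed (crel C) A.
  move=> x y exy; apply/idP/idP => [xA|yA]; first exact: cl exy.
  by apply: cl yA _; rewrite crel_sym.
by rewrite -(closed_connect clA cvu).
Qed.

Lemma comp_eq v u : u \in comp C v -> comp C u = comp C v.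
Proof.
rewrite inE => cvu; apply/setP => w; rewrite !inE; apply/idP/idP => h.
  exact: connect_trans cvu h.
by apply: connect_trans h; rewrite crel_cs.
Qed.

Lemma compE_in v e : e \in C -> incident v e -> e \in compE C v.
Proof. by move=> eC ve; rewrite inE eC /=; apply/existsP; exists v; rewrite comp_self. Qed.

Lemma compEP v e : e \in compE C v -> [/\ e \in C, src e \in comp C v & dst e \in comp C v].
Proof.
rewrite inE => /andP[eC /existsP[u /andP[uc ue]]].
rewrite inE in uc; split => //; rewrite inE; apply: connect_trans uc _;
  apply: crel_inc2 eC ue _; by rewrite ?incident_src ?incident_dst.
Qed.

Lemma hex_conn h u u' : h \in S -> hexE S h \subset C ->
  u \in hexV S h -> u' \in hexV S h -> connect (crel C) u u'.
Proof.
move=> hS sub uh u'h.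
pose vk k : V := insubd u (nth p0 (hex_verts h) k).
have vkE k : (k < 6)%N -> val (vk k) = nth p0 (hex_verts h) k.
  move=> hk; rewrite val_insubd.
  by rewrite (mem_vertsH hS (mem_nth _ _)) // size_hv.
have step k : (k < 5)%N -> crel C (vk k) (vk k.+1).
  move=> hk.
  have hk6 : (k < 6)%N by apply: ltn_trans hk _.
  have xin : nth e0 (hex_edges h) k \in edgesH S.
    by apply: (mem_edgesH hS); apply: mem_nth; rewrite size_he.
  pose x : E := SeqSub xin.
  have xC : x \in C by apply: (subsetP sub); rewrite inE /= mem_nth ?size_he.
  apply/existsP; exists x; rewrite xC /= !vkE //; exact: LF5.
have c0 k : (k < 6)%N -> connect (crel C) (vk 0%N) (vk k).
  elim: k => [|k IH] hk; first exact: connect0.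
  apply: connect_trans (IH (ltnW hk)) _; apply: connect1; exact: step.
have pos w : w \in hexV S h -> exists2 k, (k < 6)%N & w = vk k.
  rewrite inE => /LF9 [k hk ek]; exists k => //; apply: val_inj; by rewrite vkE.
have [k hk ->] := pos u uh; have [k' hk' ->] := pos u' u'h.
apply: connect_trans (c0 k' hk'); rewrite crel_cs; exact: c0.
Qed.

End Comp.

End MG.
Import MG.

Module MF.

Section Config.
Variable S : seq point.
Hypothesis cellS : all is_cell S.
Local Notation E := (EH S).
Local Notation V := (VH S).
Variables (n : nat) (hh : 'I_n -> point) (M : {set E}).
Hypotheses (hhS : forall i, hh i \in S) (hh_inj : injective hh)
  (disj : forall i j, i != j -> [disjoint hexV S (hh i) & hexV S (hh j)])
  (pM : perfect_matching M) (aM : forall i, alternating M (hh i)).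

Definition H i := hexE S (hh i).
Definition HU := \bigcup_i H i.
Definition VU := \bigcup_i hexV S (hh i).
Definition U (a : {ffun 'I_n -> bool}) := \bigcup_(i | a i) H i.
Definition N a := sd M (U a).
Definition Cc := M :|: HU.

Lemma vdisj i j v : v \in hexV S (hh i) -> v \in hexV S (hh j) -> i = j.
Proof.
move=> vi vj; apply/eqP/negPn/negP => /disj /disjointFr /(_ vi).
by rewrite vj.
Qed.

Lemma inc_H i j v x : v \in hexV S (hh i) -> incident v x -> x \in H j -> j = i.
Proof. by move=> vi vx xj; apply: (vdisj (v := v)) => //; apply: hexE_inc xj vx. Qed.

Lemma H_disj i j x : x \in H i -> x \in H j -> i = j.
Proof.
move=> xi xj; have vj : src x \in hexV S (hh j) by case/andP: (hexE_ends xj).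
exact: (inc_H vj (incident_src x) xi).
Qed.

Lemma mem_U a i x : x \in H i -> (x \in U a) = a i.
Proof.
move=> xi; apply/bigcupP/idP => [[j aj xj]|ai]; last by exists i.
by rewrite (H_disj xi xj).
Qed.

Lemma UP a x : x \in U a -> exists2 i, a i & x \in H i.
Proof. by move/bigcupP. Qed.

Lemma HUP x : reflect (exists i, x \in H i) (x \in HU).
Proof. by apply: (iffP bigcupP) => [[i _ xi]|[i xi]]; exists i. Qed.

Lemma VUP v : reflect (exists i, v \in hexV S (hh i)) (v \in VU).
Proof. by apply: (iffP bigcupP) => [[i _ xi]|[i xi]]; exists i. Qed.

Lemma M_H i v x : v \in hexV S (hh i) -> x \in M -> incident v x -> x \in H i.
Proof. move=> vi xM vx; exact: (cov_edge (hhS i) pM (aM i) vi xM vx). Qed.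

Lemma NH a i : N a :&: H i = if a i then H i :\: M else M :&: H i.
Proof.
apply/setP => x; rewrite /N /sd !(in_setI, in_setD, in_setU).
case: (boolP (x \in H i)) => xi; last by case: (a i); rewrite !(in_setI, in_setD) (negbTE xi) ?andbF.
rewrite (mem_U a xi); case: (a i); by rewrite !(in_setI, in_setD) xi /= ?andbT ?andbF ?orbF.
Qed.

Lemma altN a i : alternating (N a) (hh i).
Proof.
rewrite -AltI // -/(H i) NH; case: (a i); last by rewrite AltI.
by rewrite AltFlip.
Qed.

Lemma pmN a : perfect_matching (N a).
Proof.
apply/forallP => v; apply/eqP.
have -> : #|[set e in N a | incident v e]| = #|N a :&: Ev v|.
  by apply: eq_card => x; rewrite !inE.
case: (VUP v) => [[i vi]|nv].
  have -> : N a :&: Ev v = N a :&: hexE S (hh i) :&: Ev v.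
    apply/setP => x; rewrite !in_setI [x \in Ev v]inE.
    case: (boolP (incident v x)) => vx; rewrite ?andbF ?andbT //.
    case: (boolP (x \in N a)) => xN //=; apply/esym.
    move: xN; rewrite /N /sd !(in_setU, in_setD).
    case: (boolP (x \in U a)) => [/UP [j _ xj] _|_]; first by rewrite -(inc_H vi vx xj).
    rewrite /= ?andbT ?andbF ?orbF => xM; apply: M_H vi xM vx.
  by move: (altN a i); rewrite AltDeg // => /forallP /(_ v) /implyP /(_ vi) /eqP.
have -> : N a :&: Ev v = M :&: Ev v.
  apply/setP => x; rewrite !in_setI [x \in Ev v]inE /N /sd !(in_setU, in_setD).
  case: (boolP (incident v x)) => vx; rewrite ?andbF ?andbT //.
  case: (boolP (x \in U a)) => [/UP [j _ xj]|]; last by rewrite /= ?andbT ?andbF ?orbF.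
  by case: nv; exists j; apply: hexE_inc xj vx.
exact: pm_deg.
Qed.


Lemma Cc_hex i v x : v \in hexV S (hh i) -> x \in Cc -> incident v x -> x \in H i.
Proof.
move=> vi; rewrite in_setU => /orP[xM|/HUP [j xj]] vx; first exact: M_H vi xM vx.
by rewrite -(inc_H vi vx xj).
Qed.

Lemma H_Cc i : H i \subset Cc.
Proof. by apply/subsetP => x xi; rewrite in_setU; apply/orP; right; apply/HUP; exists i. Qed.

Lemma comp_hex i v : v \in hexV S (hh i) -> comp Cc v = hexV S (hh i).
Proof.
move=> vi; apply/eqP; rewrite eqEsubset; apply/andP; split.
  apply: comp_closed vi => u w ui /crel_inc [x xC /andP[ux wx]].
  exact: hexE_inc (Cc_hex ui xC ux) wx.
apply/subsetP => u ui; rewrite inE; exact: hex_conn (hhS i) (H_Cc i) vi ui.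
Qed.

Lemma compE_hex i v : v \in hexV S (hh i) -> compE Cc v = H i.
Proof.
move=> vi; apply/setP => x; apply/idP/idP => [xE|xi].
  have [xC sx _] := compEP xE; rewrite (comp_hex vi) in sx.
  exact: Cc_hex sx xC (incident_src x).
have sx : src x \in comp Cc v.
  by rewrite (comp_hex vi); case/andP: (hexE_ends xi).
rewrite inE (subsetP (H_Cc i) x xi) /=; apply/existsP; exists (src x).
by rewrite sx incident_src.
Qed.

Lemma Cc_nonhex u : u \notin VU -> Cc :&: Ev u = M :&: Ev u.
Proof.
move=> nu; apply/setP => x; rewrite !in_setI in_setU [x \in Ev u]inE.
case: (boolP (incident u x)) => ux; rewrite ?andbF ?andbT //.
case: (boolP (x \in HU)) => [/HUP [j xj]|]; last by rewrite orbF.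
by case/VUP: nu; exists j; exact: hexE_inc xj ux.
Qed.

Lemma comp_edge v m : v \notin VU -> M :&: Ev v = [set m] ->
  comp Cc v = [set src m; dst m] /\ compE Cc v = [set m].
Proof.
move=> nv eM.
have mM : m \in M by have := set11 m; rewrite -eM in_setI => /andP[].
have vm : incident v m by have := set11 m; rewrite -eM in_setI inE => /andP[].
have nVU u : incident u m -> u \notin VU.
  move=> um; apply/negP => /VUP [j uj]; case/VUP: nv; exists j.
  exact: hexE_inc (M_H uj mM um) vm.
have Cu u : incident u m -> Cc :&: Ev u = [set m].
  move=> um; rewrite Cc_nonhex ?nVU //.
  apply/eqP; rewrite eq_sym eqEcard cards1 pm_deg // andbT.
  by rewrite sub1set in_setI mM inE.
have A_cl : forall u w, u \in [set src m; dst m] -> crel Cc u w -> w \in [set src m; dst m].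
  move=> u w uA /crel_inc [x xC /andP[ux wx]].
  have um : incident u m by move: uA; rewrite !inE => /orP[] /eqP ->; rewrite ?incident_src ?incident_dst.
  have : x \in Cc :&: Ev u by rewrite in_setI xC inE.
  rewrite Cu // inE => /eqP xm; move: wx; rewrite xm incidentE !inE //.
have vA : v \in [set src m; dst m] by move: vm; rewrite incidentE !inE.
have ecomp : comp Cc v = [set src m; dst m].
  apply/eqP; rewrite eqEsubset comp_closed //=.
  apply/subsetP => u uA; rewrite inE.
  have mC : m \in Cc by rewrite in_setU mM.
  apply: crel_inc2 mC vm _.
  by move: uA; rewrite !inE => /orP[] /eqP ->; rewrite ?incident_src ?incident_dst.
split => //; apply/setP => x; apply/idP/idP => [xE|].
  have [xC sx _] := compEP xE; rewrite ecomp in sx.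
  have um : incident (src x) m by move: sx; rewrite !inE => /orP[] /eqP ->; rewrite ?incident_src ?incident_dst.
  have : x \in Cc :&: Ev (src x) by rewrite in_setI xC inE incident_src.
  by rewrite Cu.
rewrite inE => /eqP ->; apply: compE_in => //; by rewrite in_setU mM.
Qed.

Lemma clarCc : clar_cover Cc.
Proof.
apply/forallP => v; case: (boolP (v \in VU)) => [/VUP [i vi]|nv].
  apply/orP; left; apply/existsP; exists (SeqSub (hhS i)) => /=.
  by rewrite (comp_hex vi) (compE_hex vi) !eqxx.
have := pm_deg v pM => /eqP /cards1P [m eM].
have [c1 c2] := comp_edge nv eM.
by apply/orP; right; rewrite c1 c2 cards2 src_dst cards1.
Qed.


Lemma H_ne i : exists y, y \in H i.
Proof. by apply/set0Pn; rewrite -card_gt0 /H hexE_card. Qed.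

Lemma memN a i y : y \in H i -> (y \in N a) = (y \in M) (+) a i.
Proof.
move=> yi; rewrite /N /sd !(in_setU, in_setD) (mem_U a yi).
by case: (y \in M); case: (a i).
Qed.

Lemma memN_out a y : y \notin HU -> (y \in N a) = (y \in M).
Proof.
move=> ny; have nU : y \notin U a.
  by apply/negP => /UP [i _ yi]; case/negP: ny; apply/HUP; exists i.
rewrite /N /sd !(in_setU, in_setD) (negbTE nU) /=; by case: (y \in M).
Qed.

Lemma hexcomp_Cc h : hex_comp Cc h -> exists i, h = hh i.
Proof.
case/andP=> hS /existsP [v /andP[/eqP c1 /eqP c2]].
case: (boolP (v \in VU)) => [/VUP [i vi]|nv].
  by exists i; apply: hexE_inj (hhS i) _ => //; rewrite -c2 (compE_hex vi).
have := pm_deg v pM => /eqP /cards1P [m eM].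
have [_ c3] := comp_edge nv eM.
by have := hexE_card hS; rewrite -c2 c3 cards1.
Qed.

Lemma hexcomp_hh i : hex_comp Cc (hh i).
Proof.
rewrite /hex_comp hhS /=.
have [v ev] := vert_ex (k := 0) (hhS i) (isT : (0 < 6)%N).
have vi : v \in hexV S (hh i) by rewrite inE ev mem_nth ?size_hv.
by apply/existsP; exists v; rewrite (comp_hex vi) (compE_hex vi) !eqxx.
Qed.

Lemma edgecomp_M e : edge_comp Cc e -> (e \in M) && (e \notin HU).
Proof.
case/existsP=> v /andP[c1 /eqP c2].
case: (boolP (v \in VU)) => [/VUP [i vi]|nv].
  by have := hexE_card (hhS i); rewrite -/(H i) -(compE_hex vi) c2 cards1.
have := pm_deg v pM => /eqP /cards1P [m eM].
have [_ c3] := comp_edge nv eM; rewrite c2 in c3.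
have em : e = m by apply/set1P; rewrite -c3 set11.
have mM : m \in M by have := set11 m; rewrite -eM in_setI => /andP[].
have vm : incident v m by have := set11 m; rewrite -eM in_setI inE => /andP[].
rewrite em mM /=; apply/negP => /HUP [j mj].
by case/VUP: nv; exists j; exact: hexE_inc mj vm.
Qed.

Lemma M_edgecomp e : e \in M -> e \notin HU -> edge_comp Cc e.
Proof.
move=> eM nH.
have nv : src e \notin VU.
  apply/negP => /VUP [i si]; case/negP: nH; apply/HUP; exists i.
  exact: M_H si eM (incident_src e).
have := pm_deg (src e) pM => /eqP /cards1P [m em].
have me : e = m by apply/set1P; rewrite -em in_setI eM inE incident_src.
have [c1 c2] := comp_edge nv em.
apply/existsP; exists (src e); by rewrite c1 c2 cards2 src_dst -me !eqxx.
Qed.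

Lemma fC_Cc : fC Cc = [set N a | a : {ffun 'I_n -> bool}].
Proof.
apply/setP => X; apply/idP/idP.
  rewrite inE => /andP[pX /andP[/forallP aX /forallP eX]].
  rewrite inE in pX.
  have alt' i : alternating X (hh i) by have := aX (SeqSub (hhS i)); rewrite /= hexcomp_hh.
  have edge' e : e \in M -> e \notin HU -> e \in X.
    by move=> eM nH; have := eX e; rewrite M_edgecomp.
  apply/imsetP; exists [ffun i => X :&: H i != M :&: H i] => //.
  apply/setP => x; case: (boolP (x \in HU)) => [/HUP [i xi]|nx].
    rewrite (memN _ xi) ffunE.
    case: (AltTwo (hhS i) (alt' i) (aM i)) => eq; rewrite -/(H i) in eq.
      rewrite eq eqxx addbF.
      by have /setP/(_ x) := eq; rewrite !in_setI xi !andbT.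
    have -> : (X :&: H i != M :&: H i) = true.
      apply/negP => /eqP eq2; have [y yi] := H_ne i.
      have /setP/(_ y) := eq2; rewrite eq !(in_setI, in_setD) yi.
      by case: (y \in M).
    have /setP/(_ x) := eq; rewrite !(in_setI, in_setD) xi andbT => ->.
    by case: (x \in M).
  rewrite memN_out //; case: (boolP (x \in M)) => xM; first exact: edge' xM nx.
  apply/negP => xX.
  case: (boolP (src x \in VU)) => [/VUP [i si]|nv].
    case/negP: nx; apply/HUP; exists i; exact: cov_edge (hhS i) pX (alt' i) si xX (incident_src x).
  have := pm_deg (src x) pM => /eqP /cards1P [m em].
  have mM : m \in M by have := set11 m; rewrite -em in_setI => /andP[].
  have vm : incident (src x) m by have := set11 m; rewrite -em in_setI inE => /andP[].
  have mH : m \notin HU.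
    by apply/negP => /HUP [j mj]; case/VUP: nv; exists j; exact: hexE_inc mj vm.
  have mX := edge' m mM mH.
  have := pm_deg (src x) pX => /eqP /cards1P [y ey].
  have xy : x = y by apply/set1P; rewrite -ey in_setI xX inE incident_src.
  have my : m = y by apply/set1P; rewrite -ey in_setI mX inE.
  by move: xM; rewrite xy -my mM.
case/imsetP => a _ ->; rewrite inE; apply/andP; split; first by rewrite inE pmN.
apply/andP; split; apply/forallP.
  move=> h; apply/implyP => /hexcomp_Cc [i ->]; exact: altN.
move=> e; apply/implyP => /edgecomp_M /andP[eM nH]; by rewrite memN_out.
Qed.

Lemma cubeCc : cube_sub (fC Cc).
Proof.
split; first by apply/subsetP => X; rewrite inE => /andP[].
exists n, N; split; last 1 first.
- move=> a b; rewrite /radj.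
  have memD i y : y \in H i -> (y \in (N a :\: N b) :|: (N b :\: N a)) = (a i != b i).
    move=> yi; rewrite in_setU in_setD in_setD (memN a yi) (memN b yi).
    by case: (y \in M); case: (a i); case: (b i).
  have memDo y : y \notin HU -> (y \in (N a :\: N b) :|: (N b :\: N a)) = false.
    move=> ny; rewrite in_setU in_setD in_setD !memN_out //; by case: (y \in M).
  apply/idP/idP.
    case/hasP => h hS /eqP eD.
    have [y yh] : exists y, y \in hexE S h by apply/set0Pn; rewrite -card_gt0 hexE_card.
    have yHU : y \in HU.
      by apply/negPn/negP => ny; have := memDo y ny; rewrite eD yh.
    case/HUP: yHU => i0 yi0.
    have d0 : a i0 != b i0 by rewrite -(memD _ _ yi0) eD.
    have key j : a j != b j -> hh j = h.
      move=> dj; apply: (hexE_inj2 cellS (hhS j) hS).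
      have -> : hexE S (hh j) :&: hexE S h = H j.
        apply/setP => z; rewrite in_setI; case: (boolP (z \in H j)) => zj //=.
        by rewrite -eD (memD _ _ zj).
      by rewrite /H hexE_card.
    rewrite /hamming; apply/cards1P; exists i0; apply/setP => j.
    rewrite !inE; apply/idP/eqP => [dj|->]; last exact: d0.
    by apply: hh_inj; rewrite (key j dj) (key i0 d0).
  move/cards1P => [i0 ei0]; apply/hasP; exists (hh i0) => //.
  apply/eqP/setP => y; case: (boolP (y \in HU)) => [/HUP [i yi]|ny].
    rewrite (memD _ _ yi) -/(H i0).
    have : (i \in [set i | a i != b i]) = (i == i0) by rewrite ei0 inE.
    rewrite inE => ->; apply/idP/idP => [/eqP <- // | yi0]; apply/eqP; exact: H_disj yi yi0.
  rewrite memDo //; apply/esym/negP => yi0; case/negP: ny; apply/HUP; by exists i0.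
- move=> a b eN; apply/ffunP => i; have [y yi] := H_ne i.
  have := memN a yi; rewrite eN (memN b yi); by case: (y \in M); case: (a i); case: (b i).
- by rewrite fC_Cc.
Qed.

Lemma bigcup_fC : \bigcup_(X in fC Cc) X = Cc.
Proof.
apply/setP => x; apply/bigcupP/idP => [[X] |].
  rewrite fC_Cc => /imsetP [a _ ->].
  rewrite /N /sd !(in_setU, in_setD) => /orP[/andP[_ xM]|/andP[_ xU]].
    by rewrite xM.
  have [i _ xi] := UP xU; apply/orP; right; apply/HUP; by exists i.
pose a0 : {ffun 'I_n -> bool} := [ffun=> false].
have N0 : x \in M -> x \in N a0.
  move=> xM; rewrite /N /sd !(in_setU, in_setD) xM /=; apply/orP; left.
  rewrite andbT; apply/negP => xU; have [i] := UP xU; by rewrite ffunE.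
rewrite in_setU => /orP[xM|/HUP [i xi]].
  by exists (N a0); rewrite ?N0 // fC_Cc; apply/imsetP; exists a0.
case: (boolP (x \in M)) => xM.
  by exists (N a0); rewrite ?N0 // fC_Cc; apply/imsetP; exists a0.
exists (N [ffun j => j == i]); first by rewrite fC_Cc; apply/imsetP; eexists.
by rewrite (memN _ xi) ffunE eqxx (negbTE xM).
Qed.

End Config.

End MF.
Import MF.

Module MH.

Section ClarCfg.
Variable S : seq point.
Hypothesis cellS : all is_cell S.
Local Notation E := (EH S).
Local Notation V := (VH S).
Variable C : {set E}.
Hypothesis hC : clar_cover C.

Lemma hexV_comp h v : hex_comp C h -> v \in hexV S h -> comp C v = hexV S h /\ compE C v = hexE S h.
Proof.
case/andP=> hS /existsP[w /andP[/eqP c1 /eqP c2]] vh.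
have vw : v \in comp C w by rewrite c1.
have e := comp_eq vw; split; first by rewrite e.
by rewrite -c2 /compE e.
Qed.

Definition hs := [seq h <- undup S | hex_comp C h].
Definition hh (i : 'I_(size hs)) := nth p0 hs i.

Lemma hh_mem i : hh i \in hs.
Proof. exact: mem_nth. Qed.

Lemma hhS i : hh i \in S.
Proof. by have := hh_mem i; rewrite mem_filter mem_undup => /andP[]. Qed.

Lemma hh_hc i : hex_comp C (hh i).
Proof. by have := hh_mem i; rewrite mem_filter => /andP[]. Qed.

Lemma hh_inj : injective hh.
Proof.
move=> i j e; apply/val_inj/eqP; rewrite -(nth_uniq p0 (ltn_ord i) (ltn_ord j)).
  by rewrite -/(hh i) -/(hh j) e.
by rewrite filter_uniq // undup_uniq.
Qed.

Lemma disj i j : i != j -> [disjoint hexV S (hh i) & hexV S (hh j)].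
Proof.
move=> nij; rewrite -setI_eq0; apply/eqP/setP => v; rewrite in_setI in_set0.
apply/negP => /andP[vi vj].
have [_ c1] := hexV_comp (hh_hc i) vi; have [_ c2] := hexV_comp (hh_hc j) vj.
have := hexE_inj cellS (hhS i) (hhS j); rewrite -c1 -c2 => /(_ erefl) /hh_inj eij.
by move: nij; rewrite eij eqxx.
Qed.

Definition evenE h := [set e : E | val e \in evens h].
Definition M0 := (C :\: HU S hh) :|: \bigcup_i evenE (hh i).

Lemma evenE_sub h : evenE h \subset hexE S h.
Proof.
apply/subsetP => x; rewrite !inE /evens /= => /or3P[] /eqP ->;
  by apply: mem_nth; rewrite size_he.
Qed.

Lemma altE h : h \in S -> alternating (evenE h) h.
Proof.
move=> hS; rewrite /alternating.
have -> : map (inM (evenE h)) (hex_edges h) = [seq e \in evens h | e <- hex_edges h].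
  apply/eq_in_map => e he; have hE := mem_edgesH hS he.
  by rewrite -[e]/(val (SeqSub hE : E)) inM_val inE.
by rewrite LF11 eqxx.
Qed.

Lemma M0H i : M0 :&: H S hh i = evenE (hh i).
Proof.
apply/setP => x; rewrite in_setI.
case: (boolP (x \in H S hh i)) => xi; last first.
  rewrite andbF; apply/esym/negP => xe; case/negP: xi; exact: (subsetP (evenE_sub _)).
rewrite andbT /M0 in_setU in_setD.
have -> : x \in HU S hh by apply/bigcupP; exists i.
rewrite /=; apply/bigcupP/idP => [[j _ xj]|xe]; last by exists i.
have xHj : x \in H S hh j by exact: (subsetP (evenE_sub _)).
by rewrite (H_disj disj xi xHj).
Qed.

Lemma aM0 i : alternating M0 (hh i).
Proof. by rewrite -AltI ?hhS // -/(H S hh i) M0H altE ?hhS. Qed.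

Lemma HU_C : HU S hh \subset C.
Proof.
apply/subsetP => x /bigcupP [i _ xi].
have si : src x \in hexV S (hh i) by case/andP: (hexE_ends xi).
have [_ c] := hexV_comp (hh_hc i) si.
by have [] := compEP (_ : x \in compE C (src x)); rewrite ?c.
Qed.

Lemma in_VU v : v \in VU S hh -> exists i, v \in hexV S (hh i).
Proof. by case/bigcupP => i _ vi; exists i. Qed.

Lemma VUcase v : v \notin VU S hh -> (#|comp C v| == 2) && (#|compE C v| == 1).
Proof.
move=> nv; have := forallP hC v => /orP[/existsP [h' /andP[/eqP c1 /eqP c2]]|//].
have hc : hex_comp C (val h').
  by rewrite /hex_comp (ssvalP h') /=; apply/existsP; exists v; rewrite c1 c2 !eqxx.
have h'hs : val h' \in hs by rewrite mem_filter hc mem_undup (ssvalP h').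
have ih : (index (val h') hs < size hs)%N by rewrite index_mem.
pose i := Ordinal ih.
have ei : hh i = val h' by rewrite /hh nth_index.
case/negP: nv; apply/bigcupP; exists i => //.
by rewrite ei -c1 comp_self.
Qed.

Lemma pM0 : perfect_matching M0.
Proof.
apply/forallP => v; apply/eqP.
have -> : #|[set e in M0 | incident v e]| = #|M0 :&: Ev v|.
  by apply: eq_card => x; rewrite !inE.
case: (boolP (v \in VU S hh)) => [/in_VU [i vi]|nv].
  have [_ cE] := hexV_comp (hh_hc i) vi.
  have -> : M0 :&: Ev v = M0 :&: hexE S (hh i) :&: Ev v.
    apply/setP => x; rewrite !in_setI [x \in Ev v]inE.
    case: (boolP (incident v x)) => vx; rewrite ?andbF ?andbT //.
    case: (boolP (x \in M0)) => xM //=; apply/esym.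
    move: xM; rewrite /M0 in_setU in_setD => /orP[/andP[nH xC]|/bigcupP [j _ xj]].
      have : x \in compE C v by apply: compE_in.
      rewrite cE => xh; case/negP: nH; apply/bigcupP; by exists i.
    have xHj : x \in H S hh j by exact: (subsetP (evenE_sub _)).
    have vj := hexE_inc xHj vx.
    by rewrite (vdisj disj vi vj).
  by move: (aM0 i); rewrite AltDeg ?hhS // => /forallP /(_ v) /implyP /(_ vi) /eqP.
have /andP[c1 c1'] := VUcase nv.
have /cards1P [e ce] := c1'.
have eE : e \in compE C v by rewrite ce set11.
have [eC se de] := compEP eE.
have ve : incident v e.
  rewrite incidentE; apply/negPn/negP => /norP[n1 n2].
  have sub : [set src e; dst e] \subset comp C v.
    by apply/subsetP => u; rewrite !in_setU !in_set1 => /orP[] /eqP ->.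
  have : [set src e; dst e] == comp C v by rewrite eqEcard sub cards2 src_dst (eqP c1).
  move/eqP => ec; have := comp_self C v; rewrite -ec !in_setU !in_set1.
  by rewrite (negbTE n1) (negbTE n2).
have nHe : e \notin HU S hh.
  apply/negP => /bigcupP [j _ ej]; case/negP: nv; apply/bigcupP; exists j => //.
  exact: hexE_inc ej ve.
have -> : M0 :&: Ev v = [set e].
  apply/setP => x; rewrite in_setI [x \in Ev v]inE in_set1.
  apply/idP/idP => [/andP[xM vx]|/eqP ->]; last by rewrite ve /M0 in_setU in_setD nHe eC.
  move: xM; rewrite /M0 in_setU in_setD => /orP[/andP[nH xC]|/bigcupP [j _ xj]].
    have : x \in compE C v by apply: compE_in.
    by rewrite ce in_set1.
  have xHj : x \in H S hh j by exact: (subsetP (evenE_sub _)).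
  by case/negP: nv; apply/bigcupP; exists j => //; apply: hexE_inc xHj vx.
by rewrite cards1.
Qed.

Lemma C_eq : C = Cc hh M0.
Proof.
apply/setP => x; rewrite /Cc /M0 !in_setU in_setD.
case: (boolP (x \in HU S hh)) => xH; rewrite ?orbT ?andbT /=.
  by rewrite (subsetP HU_C x xH).
apply/idP/idP => [->//|]; rewrite orbF => /orP[//|/bigcupP [j _ xj]].
have xHj : x \in H S hh j by exact: (subsetP (evenE_sub _)).
by case/negP: xH; apply/bigcupP; exists j.
Qed.

End ClarCfg.

Lemma clar_cfg S (cellS : all is_cell S) (C : {set EH S}) : clar_cover C ->
  exists n, exists hh : 'I_n -> point, exists M : {set EH S},
  [/\ (forall i, hh i \in S), injective hh,
      (forall i j, i != j -> [disjoint hexV S (hh i) & hexV S (hh j)]),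
      perfect_matching M & (forall i, alternating M (hh i)) /\ C = Cc hh M].
Proof.
move=> hC; exists (size (hs C)), (hh (C := C)), (M0 C); split.
- exact: hhS.
- exact: hh_inj.
- exact: disj.
- exact: pM0.
- split; [exact: aM0 | exact: C_eq].
Qed.

End MH.
Import MH.

Module MK.

Section SD.
Variable S : seq point.
Local Notation E := (EH S).
Lemma memsd (A B : {set E}) x : (x \in sd A B) = (x \in A) (+) (x \in B).
Proof. rewrite /sd !(in_setU, in_setD); by case: (x \in A); case: (x \in B). Qed.
Lemma sdKl (A B : {set E}) : sd A (sd A B) = B.
Proof. apply/setP => x; rewrite !memsd; by case: (x \in A); case: (x \in B). Qed.
Lemma sdA (A B C : {set E}) : sd (sd A B) C = sd A (sd B C).
Proof. apply/setP => x; rewrite !memsd; by case: (x \in A); case: (x \in B); case: (x \in C). Qed.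
Lemma sdC (A B : {set E}) : sd A B = sd B A.
Proof. apply/setP => x; rewrite !memsd; by case: (x \in A); case: (x \in B). Qed.
Lemma sdI (A B B' : {set E}) : sd A B = sd A B' -> B = B'.
Proof. by move=> e; rewrite -(sdKl A B) e sdKl. Qed.
End SD.

Section Cube.
Variable S : seq point.
Hypothesis cellS : all is_cell S.
Local Notation E := (EH S).
Variables (X : {set {set E}}) (n : nat) (phi : {ffun 'I_n -> bool} -> {set E}).
Hypotheses (hXpm : X \subset pm_set S) (phi_inj : injective phi)
  (eX : X = [set phi a | a : {ffun 'I_n -> bool}])
  (radjE : forall a b, radj (phi a) (phi b) = (hamming a b == 1)).

Lemma pmphi a : perfect_matching (phi a).
Proof.
have : phi a \in X by rewrite eX; apply/imsetP; exists a.
by move/(subsetP hXpm); rewrite inE.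
Qed.

Lemma radj_sd (A B : {set E}) : radj A B -> exists2 h, h \in S & sd A B = hexE S h.
Proof. by case/hasP => h hS /eqP e; exists h. Qed.

Definition a0 : {ffun 'I_n -> bool} := [ffun=> false].
Definition ei i : {ffun 'I_n -> bool} := [ffun j => j == i].
Definition off (a : {ffun 'I_n -> bool}) i : {ffun 'I_n -> bool} := [ffun j => a j && (j != i)].
Definition Mb := phi a0.

Lemma hamming_off (a : {ffun 'I_n -> bool}) (i : 'I_n) : a i -> hamming (off a i) a = 1%N.
Proof.
move=> ai; rewrite /hamming (_ : [set k | off a i k != a k] = [set i]) ?cards1 //.
apply/setP => k; rewrite !inE ffunE; case: (eqVneq k i) => [->|nk]; first by rewrite ai.
by rewrite andbT eqxx.
Qed.

Lemma off_ei (i : 'I_n) : off (ei i) i = a0.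
Proof. by apply/ffunP => k; rewrite !ffunE; case: (eqVneq k i). Qed.

Definition hpred i := fun h => sd Mb (phi (ei i)) == hexE S h.
Definition hh i := nth p0 S (find (hpred i) S).

Lemma hhP (i : 'I_n) : hh i \in S /\ phi (ei i) = sd Mb (hexE S (hh i)).
Proof.
have : radj Mb (phi (ei i)).
  by rewrite radjE -(off_ei i) hamming_off // ffunE eqxx.
case/hasP => h hS hp.
have hs : has (hpred i) S by apply/hasP; exists h.
split; first by rewrite /hh mem_nth // -has_find.
by have /eqP <- := nth_find p0 hs; rewrite sdKl.
Qed.

Lemma hhS i : hh i \in S. Proof. by case: (hhP i). Qed.
Lemma phi_ei i : phi (ei i) = sd Mb (hexE S (hh i)). Proof. by case: (hhP i). Qed.

Local Notation Hx i := (hexE S (hh i)).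

Lemma famH i : fam (Hx i). Proof. by exists (hh i) => //; exact: hhS. Qed.

Lemma off_comm (a : {ffun 'I_n -> bool}) (i j : 'I_n) : off (off a i) j = off (off a j) i.
Proof. apply/ffunP => k; rewrite !ffunE; by case: (a k); case: (k != i); case: (k != j). Qed.

Lemma step2 (a : {ffun 'I_n -> bool}) (i j : 'I_n) : i != j -> a i -> a j ->
  phi (off a i) = sd (phi (off (off a i) j)) (Hx j) ->
  phi (off a j) = sd (phi (off (off a i) j)) (Hx i) ->
  Hx i != Hx j ->
  phi a = sd (sd (phi (off (off a i) j)) (Hx j)) (Hx i).
Proof.
move=> nij ai aj e1 e2 nH.
set N3 := phi (off (off a i) j).
have r1 : radj (phi (off a i)) (phi a) by rewrite radjE hamming_off.
have r2 : radj (phi (off a j)) (phi a) by rewrite radjE hamming_off.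
have [g gS eg] := radj_sd r1.
have [g' g'S eg'] := radj_sd r2.
have pa1 : phi a = sd (phi (off a i)) (hexE S g) by rewrite -eg sdKl.
have pa2 : phi a = sd (phi (off a j)) (hexE S g') by rewrite -eg' sdKl.
have key : sd (Hx j) (hexE S g) = sd (Hx i) (hexE S g').
  apply: (@sdI _ N3); rewrite -!sdA -e1 -e2 -pa1 -pa2 //.
have nG : hexE S g != Hx j.
  apply/negP => /eqP eG; move: pa1; rewrite eG e1 sdA.
  have -> : sd (Hx j) (Hx j) = set0 by apply/setP => x; rewrite memsd addbb inE.
  rewrite (_ : sd N3 set0 = N3); last by apply/setP => x; rewrite memsd inE addbF.
  move/phi_inj/ffunP/(_ i); rewrite !ffunE ai eqxx /=.
  by case: eqP nij => // ->; rewrite eqxx.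
have nji : Hx j != Hx i by rewrite eq_sym.
have eGi := step cellS (famH j) (famH i) (ex_intro2 _ _ g gS erefl) (ex_intro2 _ _ g' g'S erefl) key
  nji nG.
by rewrite pa1 e1 eGi.
Qed.


Lemma sdKr (A B : {set E}) : sd (sd A B) B = A.
Proof. by rewrite sdC -(sdC B A) sdKl. Qed.

Lemma Hne i j : i != j -> Hx i != Hx j.
Proof.
move=> nij; apply/negP => /eqP e.
have : phi (ei i) = phi (ei j) by rewrite !phi_ei e.
move/phi_inj/ffunP/(_ i); rewrite !ffunE eqxx => /esym/eqP e2.
by move: nij; rewrite e2 eqxx.
Qed.

Definition ee (i j : 'I_n) : {ffun 'I_n -> bool} := [ffun k => (k == i) || (k == j)].

Lemma phi_two i j : i != j -> phi (ee i j) = sd (sd Mb (Hx j)) (Hx i).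
Proof.
move=> nij.
have o1 : off (ee i j) i = ei j.
  apply/ffunP => k; rewrite !ffunE; case: (eqVneq k i) => [->|] /=; last by rewrite andbT.
  by apply/esym/negbTE.
have o2 : off (ee i j) j = ei i.
  apply/ffunP => k; rewrite !ffunE; case: (eqVneq k j) => [->|] /=; last by rewrite andbT orbF.
  by rewrite andbF eq_sym; apply/esym/negbTE.
have o3 : off (off (ee i j) i) j = a0 by rewrite o1 off_ei.
have ai : ee i j i by rewrite ffunE eqxx.
have aj : ee i j j by rewrite ffunE eqxx orbT.
rewrite (step2 nij ai aj) ?o3 ?o1 ?o2 ?phi_ei //; exact: Hne.
Qed.

Lemma disjH i j : i != j -> [disjoint hexV S (hh i) & hexV S (hh j)].
Proof.
move=> nij; rewrite -setI_eq0; apply/eqP/setP => v; rewrite in_setI in_set0.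
apply/negP => /andP[vi vj].
set Mi := sd Mb (Hx i).
have pM : perfect_matching Mb := pmphi a0.
have pMi : perfect_matching Mi by rewrite /Mi -phi_ei; exact: pmphi.
have pMij : perfect_matching (sd Mi (Hx j)).
  by rewrite /Mi -phi_two 1?eq_sym //; exact: pmphi.
have aMi : alternating Mb (hh i) := AltPM (hhS i) pM pMi.
have aMj : alternating Mb (hh j).
  by apply: AltPM (hhS j) pM _; rewrite -phi_ei; exact: pmphi.
have aMii : alternating Mi (hh i) by apply: AltPM (hhS i) pMi _; rewrite /Mi sdKr.
have aMij : alternating Mi (hh j) := AltPM (hhS j) pMi pMij.
have /cards1P [m em] : #|Mb :&: Ev v| == 1%N by rewrite pm_deg.
have /cards1P [m' em'] : #|Mi :&: Ev v| == 1%N by rewrite pm_deg.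
have mi : m \in Mb :&: Ev v by rewrite em set11.
have m'i : m' \in Mi :&: Ev v by rewrite em' set11.
have mHi : m \in Hx i by apply: (subsetP (cov (hhS i) pM aMi vi)).
have mHj : m \in Hx j by apply: (subsetP (cov (hhS j) pM aMj vj)).
have m'Hi : m' \in Hx i by apply: (subsetP (cov (hhS i) pMi aMii vi)).
have m'Hj : m' \in Hx j by apply: (subsetP (cov (hhS j) pMi aMij vj)).
have nmm : m != m'.
  apply/negP => /eqP emm; move: mi m'i; rewrite emm !in_setI /Mi memsd m'Hi.
  by case: (m' \in Mb).
have : (1 < #|Hx i :&: Hx j|)%N.
  by apply/card_gt1P; exists m, m'; rewrite !in_setI mHi mHj m'Hi m'Hj.
move/(hexE_inj2 cellS (hhS i) (hhS j)) => ehh.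
by move: (Hne nij); rewrite ehh eqxx.
Qed.

Lemma hh_inj : injective hh.
Proof.
move=> i j e; apply/eqP/negPn/negP => /Hne; by rewrite e eqxx.
Qed.

Lemma altMb i : alternating Mb (hh i).
Proof. by apply: AltPM (hhS i) (pmphi a0) _; rewrite -phi_ei; exact: pmphi. Qed.

Lemma Nchar (Y : {set E}) (a : {ffun 'I_n -> bool}) :
  (forall k x, x \in H S hh k -> (x \in Y) = (x \in Mb) (+) a k) ->
  (forall x, x \notin HU S hh -> (x \in Y) = (x \in Mb)) -> Y = N hh Mb a.
Proof.
move=> h1 h2; apply/setP => x; case: (boolP (x \in HU S hh)) => [/HUP [k xk]|nx].
  by rewrite (h1 _ _ xk) (memN _ disjH a xk).
by rewrite h2 // memN_out.
Qed.

Lemma Nflip (b c : {ffun 'I_n -> bool}) (i : 'I_n) : (forall k, b k = c k (+) (k == i)) -> N hh Mb b = sd (N hh Mb c) (Hx i).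
Proof.
move=> hb; apply/esym/Nchar => [k x xk|x nx].
  rewrite memsd (memN _ disjH c xk) hb.
  have -> : (x \in Hx i) = (k == i).
    apply/idP/eqP => [xi|ek]; [exact: (H_disj disjH xk xi) | by rewrite -ek].
  by rewrite addbA.
rewrite memsd memN_out //.
have -> : (x \in Hx i) = false by apply/negP => xi; case/negP: nx; apply/HUP; exists i.
by rewrite addbF.
Qed.

Lemma N0 : N hh Mb a0 = Mb.
Proof. apply/esym/Nchar => [k x _|x _] //; by rewrite ffunE addbF. Qed.

Lemma w_off (a : {ffun 'I_n -> bool}) i : a i ->
  #|[set k | off a i k]| = #|[set k | a k]|.-1.
Proof.
move=> ai.
have -> : [set k | off a i k] = [set k | a k] :\ i by apply/setP => k; rewrite !inE ffunE andbC.
by rewrite (cardsD1 i [set k | a k]) inE ai.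
Qed.

Lemma phiN : forall a : {ffun 'I_n -> bool}, phi a = N hh Mb a.
Proof.
suff H : forall w (a : {ffun 'I_n -> bool}), (#|[set k | a k]| <= w)%N -> phi a = N hh Mb a.
  by move=> a; exact: (H _ a (leqnn _)).
elim=> [|w IH] a hw.
  have -> : a = a0.
    apply/ffunP => k; rewrite ffunE; apply/negP => ak.
    by move: hw; rewrite leqn0 => /eqP/cards0_eq/setP/(_ k); rewrite !inE ak.
  by rewrite N0.
case: (leqP #|[set k | a k]| 1) => [h1|h2].
  case: (posnP #|[set k | a k]|) => [h0|hp].
    by apply: IH; rewrite h0.
  have /cards1P [i ei'] : #|[set k | a k]| == 1%N by rewrite eqn_leq h1 hp.
  have -> : a = ei i.
    apply/ffunP => k; rewrite ffunE; have := in_set1 k i; rewrite -ei' inE => ->.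
    by [].
  rewrite phi_ei -{1}N0; apply/esym; apply: Nflip => k; by rewrite !ffunE.
have [i [j [ai aj nij]]] := card_gt1P h2.
rewrite !inE in ai aj.
set a1 := off a i; set a2 := off a j; set a3 := off a1 j.
have a1j : a1 j by rewrite /a1 ffunE aj eq_sym nij.
have w1 : (#|[set k | a1 k]| <= w)%N by rewrite w_off //; move: hw; case: #|_|.
have w2 : (#|[set k | a2 k]| <= w)%N by rewrite w_off //; move: hw; case: #|_|.
have w3 : (#|[set k | a3 k]| <= w)%N.
  rewrite w_off //; apply: leq_trans w1; rewrite w_off //; move: h2; case: #|_| => //= m _.
  by rewrite leq_pred.
have facts k : [/\ (k == i) ==> a k, (k == j) ==> a k & ~~ ((k == i) && (k == j))].
  split; [by apply/implyP => /eqP -> | by apply/implyP => /eqP -> |].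
  by apply/negP => /andP[/eqP -> /eqP e]; rewrite e eqxx in nij.
have e1 : phi a1 = sd (phi a3) (Hx j).
  rewrite !IH //; apply: Nflip => k; rewrite /a3 /a1 !ffunE.
  have [f1 f2 f3] := facts k; move: f1 f2 f3.
  by case: (a k); case: (k == i); case: (k == j).
have e2 : phi a2 = sd (phi a3) (Hx i).
  rewrite !IH //; apply: Nflip => k; rewrite /a3 /a2 /a1 !ffunE.
  have [f1 f2 f3] := facts k; move: f1 f2 f3.
  by case: (a k); case: (k == i); case: (k == j).
rewrite (step2 nij ai aj e1 e2 (Hne nij)) -/a1 -/a3 -e1 IH //.
apply/esym; apply: Nflip => k; rewrite /a1 ffunE.
have [f1 f2 f3] := facts k; move: f1 f2 f3.
by case: (a k); case: (k == i); case: (k == j).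
Qed.

Lemma cube_config :
  exists2 C : {set E}, clar_cover C & fC C = X.
Proof.
exists (Cc hh Mb); first exact: clarCc hhS disjH (pmphi a0) altMb.
rewrite (fC_Cc cellS hhS disjH (pmphi a0) altMb) eX.
apply/setP => Y; apply/imsetP/imsetP => [[a _ ->]|[a _ ->]]; exists a => //; [exact/esym/phiN | exact: phiN].
Qed.

End Cube.

End MK.
Import MK.


Lemma bigcup_clar S (cellS : all is_cell S) (C : {set EH S}) :
  clar_cover C -> \bigcup_(X in fC C) X = C.
Proof.
move=> hC; have [n [hh [M [h1 h2 h3 h4 [h5 ->]]]]] := clar_cfg cellS hC.
exact (bigcup_fC cellS h1 h3 h4 h5).
Qed.

Theorem theorem2 (S : seq point) :
  hexagonal_system S -> kekulean S ->
  [/\ (forall C : {set EH S}, clar_cover C -> cube_sub (fC C)),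
      (forall C C' : {set EH S}, clar_cover C -> clar_cover C' -> fC C = fC C' -> C = C'),
      (forall X : {set {set EH S}}, cube_sub X ->
          exists2 C : {set EH S}, clar_cover C & fC C = X)
    & (forall C C' : {set EH S}, clar_cover C -> clar_cover C' ->
          clar_le C C' = (fC C \subset fC C'))].
Proof.
case=> _ cellS _ _ _; split.
- move=> C hC; have [n [hh [M [h1 h2 h3 h4 [h5 ->]]]]] := clar_cfg cellS hC.
  exact (cubeCc cellS h1 h2 h3 h4 h5).
- move=> C C' hC hC' e.
  by rewrite -(bigcup_clar cellS hC) -(bigcup_clar cellS hC') e.
- move=> X [hX [n [phi [inj eX radjE]]]]; exact (cube_config cellS hX inj eX radjE).
- by [].
Qed.
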